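(* Under the standing assumptions below (for both $k=l$ and $k=r$), let $f(p):=f_l(p)+f_r(p)+u_r-u_l$ for $p>0$, and let $I_k:=\displaystyle\int_0^{p_k}\frac{dq}{\hat\rho_k(q)\,c_k(q,\hat\rho_k(q))}\in(0,+\infty]$. Then there exists a unique $p^*\in(0,\infty)$ with $f(p^* )=0$ if and only if $$u_r-u_l<I_l+I_r.$$
   Context: For each $k\in\{l,r\}$: $\varGamma_k,h_k:(0,\infty)\to\mathbb R$ are twice continuously differentiable and satisfy (C1) $\varGamma_k'\le 0$, $(\rho\varGamma_k(\rho))'\ge 0$, $(\rho\varGamma_k(\rho))''\ge0$; (C2) $\lim_{\rho\to+\infty}\varGamma_k(\rho)=\varGamma_{k,\infty}>0$ and $\varGamma_k(\rho)\le\varGamma_{k,\infty}+2$ for all $\rho>0$; (C3) $h_k'\ge0$, $h_k''\ge0$. Equation of state $p=\varGamma_k(\rho)\rho e+h_k(\rho)$, i.e. $e_k(p,\rho)=\frac{p-h_k(\rho)}{\varGamma_k(\rho)\rho}$; sound speed $c_k(p,\rho)=\sqrt{\left(\frac1\rho+\frac{\varGamma_k'(\rho)}{\varGamma_k(\rho)}\right)(p-h_k(\rho))+\frac p\rho\varGamma_k(\rho)+h_k'(\rho)}$. Initial states $(\rho_l,u_l,p_l)$ and $(\rho_r,u_r,p_r)$ with $\rho_k>0$, $p_k>0$, $u_k\in\mathbb R$, $e_k(p_k,\rho_k)\ge0$. Hugoniot function $\varPhi_k(p,\rho):=\varGamma_k(\rho_k)\rho_k(p-h_k(\rho))-\varGamma_k(\rho)\rho(p_k-h_k(\rho_k))-\tfrac12\varGamma_k(\rho_k)(p+p_k)\varGamma_k(\rho)(\rho-\rho_k)$;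 $\rho_{k,\max}$ is the unique $\rho>\rho_k$ with $(\rho-\rho_k)\varGamma_k(\rho)=2\rho_k$; for $p>p_k$, $\rho_k^H(p)$ is the unique $\rho\in(\rho_k,\rho_{k,\max})$ with $\varPhi_k(p,\rho)=0$. $\hat\rho_k$ is the solution of $\frac{d\hat\rho}{dq}=\frac{1}{c_k(q,\hat\rho)^2}$, $\hat\rho(p_k)=\rho_k$, assumed to exist on $(0,p_k]$ with $\hat\rho_k(q)>0$ and $e_k(q,\hat\rho_k(q))\ge 0$ there. Define $f_k(p)=\int_{p_k}^{p}\frac{dq}{\hat\rho_k(q)c_k(q,\hat\rho_k(q))}$ for $0<p\le p_k$ and $f_k(p)=\left((p-p_k)\left(\frac1{\rho_k}-\frac1{\rho_k^H(p)}\right)\right)^{1/2}$ for $p>p_k$. *)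

(* Defs.v *)
From Stdlib Require Import Reals Lra Classical ClassicalEpsilon.
Open Scope R_scope.

(* Riemann integral of g from a to b (signed, Stdlib convention);
   0 if g is not Riemann integrable there (never used in that case). *)
Definition Rint (g : R -> R) (a b : R) : R :=
  match excluded_middle_informative (exists _ : Riemann_integrable g a b, True) with
  | left H => RiemannInt (proj1_sig (constructive_indefinite_description _ H))
  | right _ => 0
  end.

(* extended reals (only +infinity needed) *)
Inductive ERbar := Fin (r : R) | PInf.

Definition ER_plus (x y : ERbar) : ERbar :=
  match x, y with Fin a, Fin b => Fin (a + b) | _, _ => PInf end.

Definition R_lt_ER (x : R) (y : ERbar) : Prop :=
  match y with Fin b => x < b | PInf => True end.

Definition improper0_cv (g : R -> R) (b L : R) : Prop :=
  forall eps, 0 < eps -> exists delta, 0 < delta /\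
    forall a, 0 < a < delta -> Rabs (Rint g a b - L) < eps.

(* improper integral int_0^b g, in (-inf,+inf]: value of the limit if it
   converges, +infinity otherwise (the integrands here are positive) *)
Definition improper0 (g : R -> R) (b : R) : ERbar :=
  match excluded_middle_informative (exists L, improper0_cv g b L) with
  | left H => Fin (proj1_sig (constructive_indefinite_description _ H))
  | right _ => PInf
  end.

(* Equation of state data: Gamma, h with their first and second derivatives,
   and the limit Gamma_infinity. *)
Record EOS := mkEOS {
  Gam : R -> R; Gam1 : R -> R; Gam2 : R -> R;
  hh : R -> R; hh1 : R -> R; hh2 : R -> R;
  Ginf : R }.

Definition EOS_ok (E : EOS) : Prop :=
  (forall x, 0 < x ->
     derivable_pt_lim (Gam E) x (Gam1 E x) /\
     derivable_pt_lim (Gam1 E) x (Gam2 E x) /\ continuity_pt (Gam2 E) x /\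
     derivable_pt_lim (hh E) x (hh1 E x) /\
     derivable_pt_lim (hh1 E) x (hh2 E x) /\ continuity_pt (hh2 E) x) /\
  (* (C1) Gamma' <= 0, (rho Gamma)' >= 0, (rho Gamma)'' >= 0 *)
  (forall x, 0 < x ->
     Gam1 E x <= 0 /\
     0 <= Gam E x + x * Gam1 E x /\
     0 <= 2 * Gam1 E x + x * Gam2 E x) /\
  (forall eps, 0 < eps -> exists M, forall x, M < x -> Rabs (Gam E x - Ginf E) < eps) /\
  0 < Ginf E /\
  (forall x, 0 < x -> Gam E x <= Ginf E + 2) /\
  (forall x, 0 < x -> 0 <= hh1 E x /\ 0 <= hh2 E x).

Definition eint (E : EOS) (p rho : R) : R :=
  (p - hh E rho) / (Gam E rho * rho).

Definition csound (E : EOS) (p rho : R) : R :=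
  sqrt ((/ rho + Gam1 E rho / Gam E rho) * (p - hh E rho)
        + p / rho * Gam E rho + hh1 E rho).

Definition Hug (E : EOS) (rho0 p0 p rho : R) : R :=
  Gam E rho0 * rho0 * (p - hh E rho) - Gam E rho * rho * (p0 - hh E rho0)
  - / 2 * Gam E rho0 * (p + p0) * Gam E rho * (rho - rho0).

Definition side_ok (E : EOS) (rho0 p0 : R) (rhomax : R)
    (rhoH rhat : R -> R) : Prop :=
  0 < rho0 /\ 0 < p0 /\ 0 <= eint E p0 rho0 /\
  rho0 < rhomax /\ (rhomax - rho0) * Gam E rhomax = 2 * rho0 /\
  (forall r, rho0 < r -> (r - rho0) * Gam E r = 2 * rho0 -> r = rhomax) /\
  (forall p, p0 < p ->
     rho0 < rhoH p < rhomax /\ Hug E rho0 p0 p (rhoH p) = 0 /\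
     (forall r, rho0 < r < rhomax -> Hug E rho0 p0 p r = 0 -> r = rhoH p)) /\
  rhat p0 = rho0 /\
  (forall q, 0 < q < p0 ->
     derivable_pt_lim rhat q (/ (csound E q (rhat q)) ^ 2)) /\
  (forall eps, 0 < eps -> exists delta, 0 < delta /\
     forall q, p0 - delta < q <= p0 -> Rabs (rhat q - rho0) < eps) /\
  (forall q, 0 < q <= p0 -> 0 < rhat q /\ 0 <= eint E q (rhat q)).

Definition rar_integrand (E : EOS) (rhat : R -> R) (q : R) : R :=
  / (rhat q * csound E q (rhat q)).

Definition fk (E : EOS) (rho0 p0 : R) (rhoH rhat : R -> R) (p : R) : R :=
  if Rle_dec p p0 then Rint (rar_integrand E rhat) p0 p
  else sqrt ((p - p0) * (/ rho0 - / rhoH p)).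

(* Main.v *)
Require Import Defs.
From Stdlib Require Import Reals Lra ClassicalEpsilon Classical.
From Coquelicot Require Import Coquelicot.
Open Scope R_scope.


Lemma cont_ed (f : R -> R) x :
  (forall eps, 0 < eps -> exists d, 0 < d /\ forall y, Rabs (y - x) < d -> Rabs (f y - f x) < eps) ->
  continuity_pt f x.
Proof.
  intros H eps Heps. destruct (H eps Heps) as [d [Hd Hy]].
  exists d; split; [lra|]. intros y [_ Hy']. apply Hy. exact Hy'.
Qed.

Lemma cont_ed' (f : R -> R) x : continuity_pt f x ->
  forall eps, 0 < eps -> exists d, 0 < d /\ forall y, Rabs (y - x) < d -> Rabs (f y - f x) < eps.
Proof.
  intros H eps Heps. destruct (H eps Heps) as [d [Hd Hy]].
  exists d; split; [lra|]. intros y Hyx.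
  destruct (Req_dec y x) as [->|Hne].
  - unfold Rminus; rewrite Rplus_opp_r, Rabs_R0; lra.
  - apply (Hy y). split; [split; [exact I| auto]| exact Hyx].
Qed.

Lemma cont_local (f g : R -> R) x d : 0 < d -> (forall y, Rabs (y - x) < d -> f y = g y) ->
  continuity_pt g x -> continuity_pt f x.
Proof.
  intros Hd Heq Hg. apply cont_ed. intros eps Heps.
  destruct (cont_ed' g x Hg eps Heps) as [d' [Hd' H']].
  exists (Rmin d d'); split; [apply Rmin_pos; lra|].
  intros y Hy. rewrite (Heq y), (Heq x).
  - apply H'. eapply Rlt_le_trans; [exact Hy| apply Rmin_r].
  - unfold Rminus; rewrite Rplus_opp_r, Rabs_R0; lra.
  - eapply Rlt_le_trans; [exact Hy| apply Rmin_l].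
Qed.

Lemma der_cont f x l : derivable_pt_lim f x l -> continuity_pt f x.
Proof. intro H. apply derivable_continuous_pt. exists l. exact H. Qed.

Lemma Rmin_cont p0 x : continuity_pt (fun y => Rmin y p0) x.
Proof.
  apply cont_ed. intros eps Heps. exists eps; split; auto. intros y Hy.
  unfold Rmin; destruct (Rle_dec y p0), (Rle_dec x p0);
  apply Rabs_def2 in Hy; apply Rabs_def1; lra.
Qed.

Lemma my_IVT (f : R -> R) a b y : a < b -> (forall x, a <= x <= b -> continuity_pt f x) ->
  f a < y < f b -> exists c, a < c < b /\ f c = y.
Proof.
  intros Hab Hc Hy.
  destruct (Ranalysis5.IVT_interv (fun x => f x - y) a b) as [c [Hc1 Hc2]]; auto.
  - intros x Hx. apply continuity_pt_minus; [apply Hc; auto| apply continuity_pt_const; intros u v; auto].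
  - lra.
  - lra.
  - exists c. split; [|lra]. split.
    + destruct (Rle_lt_or_eq_dec _ _ (proj1 Hc1)) as [h|h]; auto. subst; lra.
    + destruct (Rle_lt_or_eq_dec _ _ (proj2 Hc1)) as [h|h]; auto. subst; lra.
Qed.

Lemma mono_of_der (F F' : R -> R) a :
  (forall x, a < x -> derivable_pt_lim F x (F' x)) -> (forall x, a < x -> 0 <= F' x) ->
  forall x y, a < x -> x <= y -> F x <= F y.
Proof.
  intros Hd Hp x y Hx Hxy. destruct (Rle_lt_or_eq_dec _ _ Hxy) as [h|h]; [|subst; lra].
  destruct (MVT_cor2 F F' x y h) as [c [Hc1 Hc2]].
  - intros c Hc. apply Hd. lra.
  - assert (0 <= F' c) by (apply Hp; lra). nra.
Qed.

Lemma smono_of_der (F F' : R -> R) a :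
  (forall x, a < x -> derivable_pt_lim F x (F' x)) -> (forall x, a < x -> 0 < F' x) ->
  forall x y, a < x -> x < y -> F x < F y.
Proof.
  intros Hd Hp x y Hx h.
  destruct (MVT_cor2 F F' x y h) as [c [Hc1 Hc2]].
  - intros c Hc. apply Hd. lra.
  - assert (0 < F' c) by (apply Hp; lra). nra.
Qed.


Section EOSs.
Variable E : EOS.
Hypothesis HE : EOS_ok E.

Lemma Gam_cont x : 0 < x -> continuity_pt (Gam E) x.
Proof. intro Hx. destruct HE as [Hd _]. apply (der_cont _ _ (Gam1 E x)). apply Hd; auto. Qed.
Lemma Gam1_cont x : 0 < x -> continuity_pt (Gam1 E) x.
Proof. intro Hx. destruct HE as [Hd _]. apply (der_cont _ _ (Gam2 E x)). apply Hd; auto. Qed.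
Lemma hh_cont x : 0 < x -> continuity_pt (hh E) x.
Proof. intro Hx. destruct HE as [Hd _]. apply (der_cont _ _ (hh1 E x)). apply Hd; auto. Qed.
Lemma hh1_cont x : 0 < x -> continuity_pt (hh1 E) x.
Proof. intro Hx. destruct HE as [Hd _]. apply (der_cont _ _ (hh2 E x)). apply Hd; auto. Qed.

Lemma Gam_ge x : 0 < x -> Ginf E <= Gam E x.
Proof.
  intro Hx. destruct HE as [Hd [Hc1 [Hlim [Hpos [Hbd Hh]]]]].
  destruct (Rle_or_lt (Ginf E) (Gam E x)) as [h|h]; auto. exfalso.
  destruct (Hlim (Ginf E - Gam E x)) as [M HM]; [lra|].
  set (y := Rmax x M + 1).
  assert (Hy1 : x < y) by (unfold y; generalize (Rmax_l x M); lra).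
  assert (Hy2 : M < y) by (unfold y; generalize (Rmax_r x M); lra).
  specialize (HM y Hy2). apply Rabs_def2 in HM.
  assert (Gam E y <= Gam E x).
  { assert (Hm := mono_of_der (fun z => - Gam E z) (fun z => - Gam1 E z) 0).
    cut (- Gam E x <= - Gam E y); [lra|]. apply Hm; try lra.
    - intros z Hz. apply derivable_pt_lim_opp. apply Hd; auto.
    - intros z Hz. destruct (Hc1 z Hz); lra. }
  lra.
Qed.

Lemma Gam_pos x : 0 < x -> 0 < Gam E x.
Proof. intro Hx. generalize (Gam_ge x Hx). destruct HE as [_ [_ [_ [Hp _]]]]. lra. Qed.

Lemma shift_mono r0 : 0 <= r0 -> forall x y, 0 < x -> x <= y -> (x - r0) * Gam E x <= (y - r0) * Gam E y.
Proof.
  intro Hr0.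
  apply (mono_of_der _ (fun z => Gam E z + (z - r0) * Gam1 E z) 0).
  - intros z Hz. destruct HE as [Hd _]. destruct (Hd z Hz) as [HG _].
    apply is_derive_Reals. apply is_derive_Reals in HG.
    evar (d : R). replace (Gam E z + (z - r0) * Gam1 E z) with d.
    + apply (is_derive_mult (fun t : R => t - r0) (Gam E)).
      * auto_derive; auto.
      * exact HG.
      * intros; apply Rmult_comm.
    + unfold d; simpl. unfold plus, mult; simpl. ring.
  - intros z Hz. destruct HE as [_ [Hc1 _]]. destruct (Hc1 z Hz) as [H1 [H2 H3]].
    nra.
Qed.

Lemma csound_pos q rho : 0 < q -> 0 < rho -> 0 <= eint E q rho -> 0 < csound E q rho.
Proof.
  intros Hq Hr He. unfold csound. apply sqrt_lt_R0.
  assert (HG := Gam_pos rho Hr).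
  destruct HE as [_ [Hc1 [_ [_ [_ Hh]]]]].
  destruct (Hc1 rho Hr) as [H1 [H2 _]]. destruct (Hh rho Hr) as [Hh1 _].
  unfold eint in He.
  assert (Hqh : 0 <= q - hh E rho).
  { assert (0 < Gam E rho * rho) by nra.
    replace (q - hh E rho) with ((q - hh E rho) / (Gam E rho * rho) * (Gam E rho * rho)) by (field; lra).
    nra. }
  assert (Hc : 0 <= / rho + Gam1 E rho / Gam E rho).
  { replace (/ rho + Gam1 E rho / Gam E rho) with ((Gam E rho + rho * Gam1 E rho) * / (rho * Gam E rho)) by (field; lra).
    apply Rmult_le_pos; auto. left. apply Rinv_0_lt_compat. nra. }
  assert (0 < q / rho * Gam E rho).
  { unfold Rdiv. apply Rmult_lt_0_compat; auto. apply Rmult_lt_0_compat; auto. apply Rinv_0_lt_compat; auto. }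
  nra.
Qed.

End EOSs.


Section RH.
Variables (P rH : R -> R) (rho0 rmax p0 : R).
Hypothesis Pc : forall r, rho0 <= r < rmax -> continuity_pt P r.
Hypothesis P0 : P rho0 = p0.
Hypothesis HH : forall p, p0 < p -> (rho0 < rH p < rmax) /\ P (rH p) = p /\
   (forall r, rho0 < r < rmax -> P r = p -> r = rH p).

Lemma rH_incr p q : p0 < p -> p < q -> rH p < rH q.
Proof.
  intros Hp Hq. destruct (HH q) as [[Hq1 Hq2] [Hq3 _]]; [lra|].
  destruct (HH p) as [[Hp1 Hp2] [Hp3 Hpu]]; [lra|].
  destruct (my_IVT P rho0 (rH q) p) as [c [Hc1 Hc2]]; auto.
  - intros x Hx. apply Pc. lra.
  - lra.
  - rewrite <- (Hpu c); auto; lra.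
Qed.

Lemma rH_cont p : p0 < p -> continuity_pt rH p.
Proof.
  intro Hp. destruct (HH p) as [[Hp1 Hp2] [Hp3 Hpu]]; auto.
  set (r1 := rH p) in *.
  apply cont_ed. intros eps Heps.
  destruct (cont_ed' P r1 (Pc r1 ltac:(lra)) (p - p0) ltac:(lra)) as [d [Hd Hdd]].
  set (r2 := r1 - Rmin eps (Rmin d (r1 - rho0)) / 2).
  assert (Hm1 := Rmin_l eps (Rmin d (r1 - rho0))).
  assert (Hm2 := Rmin_r eps (Rmin d (r1 - rho0))).
  assert (Hm3 := Rmin_l d (r1 - rho0)). assert (Hm4 := Rmin_r d (r1 - rho0)).
  assert (Hm0 : 0 < Rmin eps (Rmin d (r1 - rho0))) by (repeat apply Rmin_pos; lra).
  assert (Hr2a : rho0 < r2 < r1) by (unfold r2; lra).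
  assert (Hr2b : r1 - eps < r2) by (unfold r2; lra).
  assert (HP2 : Rabs (P r2 - P r1) < p - p0) by (apply Hdd; unfold r2; apply Rabs_def1; lra).
  apply Rabs_def2 in HP2. rewrite Hp3 in HP2.
  assert (HP2' : P r2 < p).
  { destruct (Rtotal_order (P r2) p) as [h|[h|h]]; auto.
    - exfalso. assert (r2 = r1) by (apply Hpu; auto; lra). lra.
    - exfalso. destruct (my_IVT P rho0 r2 p) as [c [Hc1 Hc2]]; auto; try lra.
      + intros x Hx. apply Pc. lra.
      + assert (c = r1) by (apply Hpu; auto; lra). lra. }
  set (q1 := P r2).
  assert (Hq1 : rH q1 = r2).
  { destruct (HH q1) as [_ [_ Hu]]; [unfold q1; lra|]. symmetry; apply Hu; auto; lra. }
  destruct (HH (p + 1)) as [[Hp1' Hp2'] [Hp3' Hpu']]; [lra|].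
  assert (Hr3 : r1 < rH (p+1)) by (apply rH_incr; lra).
  set (r3 := rH (p+1)) in *.
  set (r4 := r1 + Rmin eps (r3 - r1) / 2).
  assert (Hn1 := Rmin_l eps (r3 - r1)). assert (Hn2 := Rmin_r eps (r3 - r1)).
  assert (Hn0 : 0 < Rmin eps (r3 - r1)) by (apply Rmin_pos; lra).
  assert (Hr4 : r1 < r4 < r3) by (unfold r4; lra).
  assert (Hr4b : r4 < r1 + eps) by (unfold r4; lra).
  assert (HP4 : p < P r4).
  { destruct (Rtotal_order (P r4) p) as [h|[h|h]]; auto.
    - exfalso. destruct (my_IVT P r4 r3 p) as [c [Hc1 Hc2]]; auto; try lra.
      + intros x Hx. apply Pc. lra.
      + assert (c = r1) by (apply Hpu; auto; lra). lra.
    - exfalso. assert (r4 = r1) by (apply Hpu; auto; lra). lra. }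
  set (q2 := P r4).
  assert (Hq2 : rH q2 = r4).
  { destruct (HH q2) as [_ [_ Hu]]; [unfold q2; lra|]. symmetry; apply Hu; auto; lra. }
  exists (Rmin (p - q1) (q2 - p)).
  assert (Hk1 := Rmin_l (p - q1) (q2 - p)). assert (Hk2 := Rmin_r (p - q1) (q2 - p)).
  split; [apply Rmin_pos; unfold q1, q2 in *; lra|].
  intros y Hy. change (rH p) with r1. apply Rabs_def2 in Hy.
  assert (Hyq1 : q1 < y) by lra. assert (Hyq2 : y < q2) by lra.
  assert (Hq1p0 : p0 < q1) by (unfold q1; lra).
  apply Rabs_def1.
  - destruct (Rtotal_order y p) as [h|[h|h]].
    + assert (rH y < r1) by (unfold r1; apply rH_incr; lra). lra.
    + rewrite h. unfold Rminus. rewrite Rplus_opp_r. lra.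
    + assert (rH y < r4); [|lra]. rewrite <- Hq2. apply rH_incr; lra.
  - destruct (Rtotal_order y p) as [h|[h|h]].
    + assert (rH q1 < rH y) by (apply rH_incr; lra). lra.
    + rewrite h. unfold Rminus. rewrite Rplus_opp_r. lra.
    + assert (r1 < rH y) by (unfold r1; apply rH_incr; lra). lra.
Qed.

End RH.


Ltac cont1 :=
  match goal with
  | |- continuity_pt (fun _ => ?c) _ => apply continuity_pt_const; intros ? ?; reflexivity
  | |- continuity_pt (fun x => x) _ => apply continuity_pt_id
  | |- continuity_pt (fun x => @?a x + @?b x) _ => apply (continuity_pt_plus a b)
  | |- continuity_pt (fun x => @?a x - @?b x) _ => apply (continuity_pt_minus a b)
  | |- continuity_pt (fun x => @?a x * @?b x) _ => apply (continuity_pt_mult a b)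
  | |- continuity_pt (fun x => @?a x / @?b x) _ => apply (continuity_pt_div a b)
  | |- continuity_pt (fun x => - @?a x) _ => apply (continuity_pt_opp a)
  | |- continuity_pt (fun x => / @?a x) _ => apply (continuity_pt_inv a)
  | |- continuity_pt (fun x => ?g (@?a x)) _ => apply (continuity_pt_comp a g)
  end.
Ltac cont := repeat (first [assumption | cont1]).

Section Side.
Variable E : EOS.
Hypothesis HE : EOS_ok E.
Variables (rho0 p0 rmax : R) (rhoH rhat : R -> R).
Hypothesis HS : side_ok E rho0 p0 rmax rhoH rhat.

Let G0 := Gam E rho0.
Let h0 := hh E rho0.
Definition Af r := G0 * rho0 - / 2 * G0 * Gam E r * (r - rho0).
Definition Bf r := G0 * rho0 * hh E r + Gam E r * r * (p0 - h0) + / 2 * G0 * p0 * Gam E r * (r - rho0).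
Definition Pf r := Bf r / Af r.

Lemma rho0_pos : 0 < rho0. Proof. destruct HS; auto. Qed.
Lemma p0_pos : 0 < p0. Proof. destruct HS as [_ [h _]]; auto. Qed.

Lemma Hug_eq p r : Hug E rho0 p0 p r = Af r * p - Bf r.
Proof. unfold Hug, Af, Bf, G0, h0. ring. Qed.

Lemma Af_pos r : rho0 <= r < rmax -> 0 < Af r.
Proof.
  intros Hr. assert (H0 := rho0_pos).
  destruct HS as [_ [_ [_ [Hm [Hmeq [Hmu _]]]]]].
  assert (HG0 : 0 < G0) by (apply Gam_pos; auto).
  assert (X : (r - rho0) * Gam E r < 2 * rho0).
  { destruct (Rle_lt_or_eq_dec _ _ (proj1 Hr)) as [h|h].
    - assert (Hle := shift_mono E HE rho0 ltac:(lra) r rmax ltac:(lra) ltac:(lra)).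
      destruct (Rle_lt_or_eq_dec _ _ Hle) as [h'|h']; [lra|].
      assert (r = rmax) by (apply Hmu; lra). lra.
    - subst. lra. }
  unfold Af. nra.
Qed.

Lemma Pf_cont r : rho0 <= r < rmax -> continuity_pt Pf r.
Proof.
  intros Hr. assert (H0 := rho0_pos). assert (Hrp : 0 < r) by lra.
  assert (HA := Af_pos r Hr).
  unfold Pf, Af, Bf. cont.
  all: try (apply Gam_cont; auto); try (apply hh_cont; auto).
  unfold Af in HA; lra.
Qed.

Lemma Pf0 : Pf rho0 = p0.
Proof.
  assert (H0 := rho0_pos). assert (HG0 : 0 < G0) by (apply Gam_pos; auto).
  unfold Pf, Af, Bf. fold G0 h0. field. intro Hc; ring_simplify in Hc. nra.
Qed.

Lemma Pf_HH p : p0 < p -> (rho0 < rhoH p < rmax) /\ Pf (rhoH p) = p /\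
   (forall r, rho0 < r < rmax -> Pf r = p -> r = rhoH p).
Proof.
  intro Hp. destruct HS as [_ [_ [_ [Hm [Hmeq [Hmu [HH _]]]]]]].
  destruct (HH p Hp) as [Hr [Hz Hu]]. split; auto.
  assert (HA := Af_pos (rhoH p) ltac:(lra)).
  rewrite Hug_eq in Hz. split.
  - unfold Pf. apply (Rmult_eq_reg_l (Af (rhoH p))); [|lra]. field_simplify; lra.
  - intros r Hr' HP. apply Hu; auto. rewrite Hug_eq. rewrite <- HP. unfold Pf.
    assert (0 < Af r) by (apply Af_pos; lra). field. lra.
Qed.

Lemma rhoH_incr p q : p0 < p -> p < q -> rhoH p < rhoH q.
Proof. apply (rH_incr Pf rhoH rho0 rmax p0 Pf_cont Pf0 Pf_HH). Qed.
Lemma rhoH_cont p : p0 < p -> continuity_pt rhoH p.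
Proof. apply (rH_cont Pf rhoH rho0 rmax p0 Pf_cont Pf0 Pf_HH). Qed.

End Side.


Section Rar.
Variable E : EOS.
Hypothesis HE : EOS_ok E.
Variables (rho0 p0 rmax : R) (rhoH rhat : R -> R).
Hypothesis HS : side_ok E rho0 p0 rmax rhoH rhat.

Definition phi x := rhat (Rmin x p0).
Definition gtil x := rar_integrand E rhat (Rmin x p0).

Lemma Rmin_in x : 0 < x -> 0 < Rmin x p0 <= p0.
Proof. intro Hx. assert (H := p0_pos E rho0 p0 rmax rhoH rhat HS).
  unfold Rmin; destruct (Rle_dec x p0); lra. Qed.

Lemma phi_cont x : 0 < x -> continuity_pt phi x.
Proof.
  intro Hx. assert (H0 := p0_pos E rho0 p0 rmax rhoH rhat HS).
  destruct HS as [_ [_ [_ [_ [_ [_ [_ [Hr0 [Hrd [Hrc Hrpos]]]]]]]]]].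
  destruct (Rlt_or_le x p0) as [h|h].
  - apply (cont_local _ rhat x (p0 - x)); [lra| |].
    + intros y Hy. apply Rabs_def2 in Hy. unfold phi, Rmin. destruct (Rle_dec y p0); auto; lra.
    + apply (der_cont _ _ _ (Hrd x (conj Hx h))).
  - apply cont_ed. intros eps Heps. destruct (Hrc eps Heps) as [d [Hd Hdd]].
    exists d; split; auto. intros y Hy. apply Rabs_def2 in Hy.
    unfold phi. replace (Rmin x p0) with p0 by (unfold Rmin; destruct (Rle_dec x p0); lra).
    rewrite Hr0. unfold Rmin; destruct (Rle_dec y p0).
    + apply Hdd. lra.
    + rewrite Hr0. unfold Rminus; rewrite Rplus_opp_r, Rabs_R0; lra.
Qed.

Lemma phi_props x : 0 < x -> 0 < phi x /\ 0 <= eint E (Rmin x p0) (phi x).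
Proof.
  intro Hx. destruct (Rmin_in x Hx).
  destruct HS as [_ [_ [_ [_ [_ [_ [_ [Hr0 [Hrd [Hrc Hrpos]]]]]]]]]].
  apply Hrpos. lra.
Qed.

Lemma cs_arg_pos x : 0 < x ->
  0 < (/ phi x + Gam1 E (phi x) / Gam E (phi x)) * (Rmin x p0 - hh E (phi x))
        + Rmin x p0 / phi x * Gam E (phi x) + hh1 E (phi x).
Proof.
  intro Hx. destruct (phi_props x Hx) as [h1 h2]. destruct (Rmin_in x Hx).
  assert (Hc := csound_pos E HE (Rmin x p0) (phi x) ltac:(lra) h1 h2).
  unfold csound in Hc.
  match goal with |- 0 < ?s => destruct (Rlt_or_le 0 s) as [h|h]; auto end.
  rewrite (sqrt_neg_0 _ h) in Hc. lra.
Qed.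

Lemma gt_pos x : 0 < x -> 0 < gtil x.
Proof.
  intro Hx. destruct (phi_props x Hx) as [h1 h2]. destruct (Rmin_in x Hx).
  assert (Hc := csound_pos E HE (Rmin x p0) (phi x) ltac:(lra) h1 h2).
  unfold gtil, rar_integrand. apply Rinv_0_lt_compat. apply Rmult_lt_0_compat; auto.
Qed.

Lemma gt_cont x : 0 < x -> continuity_pt gtil x.
Proof.
  intro Hx. destruct (phi_props x Hx) as [h1 h2]. destruct (Rmin_in x Hx).
  assert (Hc := csound_pos E HE (Rmin x p0) (phi x) ltac:(lra) h1 h2).
  assert (HA := cs_arg_pos x Hx).
  assert (HG := Gam_pos E HE (phi x) h1).
  assert (Hp := phi_cont x Hx).
  assert (Hm := Rmin_cont p0 x).
  change gtil with (fun x => / (phi x * csound E (Rmin x p0) (phi x))).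
  unfold csound. cont.
  all: try (apply Gam_cont; auto); try (apply Gam1_cont; auto);
       try (apply hh_cont; auto); try (apply hh1_cont; auto); try lra.
  - apply continuity_pt_sqrt. lra.
  - unfold csound in Hc. apply Rgt_not_eq. apply Rmult_lt_0_compat; auto.
Qed.

End Rar.


Definition Bot (h : R -> R) (I : ERbar) : Prop :=
  match I with
  | Fin L => (forall p, 0 < p -> - L < h p) /\ (forall eps, 0 < eps -> exists a, 0 < a /\ h a < - L + eps)
  | PInf => forall M, exists a, 0 < a /\ h a < M
  end.

Section Rar2.
Variable E : EOS.
Hypothesis HE : EOS_ok E.
Variables (rho0 p0 rmax : R) (rhoH rhat : R -> R).
Hypothesis HS : side_ok E rho0 p0 rmax rhoH rhat.

Let g := gtil E p0 rhat.
Definition FF x := RInt (gtil E p0 rhat) p0 x.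

Lemma g_ctn x : 0 < x -> continuous g x.
Proof. intro Hx. apply continuity_pt_filterlim. apply (gt_cont E HE rho0 p0 rmax rhoH rhat HS x Hx). Qed.

Lemma g_ex a b : 0 < a -> 0 < b -> ex_RInt g a b.
Proof.
  intros Ha Hb. apply (@ex_RInt_continuous R_CompleteNormedModule). intros z Hz. apply g_ctn.
  assert (0 < Rmin a b) by (apply Rmin_pos; auto). lra.
Qed.

Lemma FF_der x : 0 < x -> derivable_pt_lim FF x (g x).
Proof.
  intro Hx. apply is_derive_Reals. unfold FF.
  apply (is_derive_RInt g (RInt g p0) p0 x).
  - assert (Hx2 : 0 < x / 2) by lra.
    exists (mkposreal _ Hx2). intros y Hy. apply (@RInt_correct R_CompleteNormedModule). apply g_ex.
    + apply (p0_pos E rho0 p0 rmax rhoH rhat HS).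
    + change (Rabs (y - x) < x / 2) in Hy. apply Rabs_def2 in Hy. lra.
  - apply g_ctn; auto.
Qed.


Lemma FF_incr x y : 0 < x -> x < y -> FF x < FF y.
Proof.
  apply (smono_of_der FF g 0).
  - intros; apply FF_der; auto.
  - intros z Hz. apply (gt_pos E HE rho0 p0 rmax rhoH rhat HS z Hz).
Qed.

Lemma FF_cont x : 0 < x -> continuity_pt FF x.
Proof. intro Hx. apply (der_cont _ _ _ (FF_der x Hx)). Qed.

Lemma FF_p0 : FF p0 = 0.
Proof. unfold FF. rewrite RInt_point. reflexivity. Qed.

Let rar := rar_integrand E rhat.

Lemma Rint_eq a b : 0 < a <= p0 -> 0 < b <= p0 -> Rint rar a b = RInt g a b.
Proof.
  intros Ha Hb.
  assert (Hagree : forall x, Rmin a b < x < Rmax a b -> g x = rar x).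
  { intros x Hx. unfold g, gtil, rar. rewrite Rmin_left; auto.
    assert (Rmax a b <= p0) by (apply Rmax_lub; lra). lra. }
  assert (ex : ex_RInt g a b) by (apply g_ex; lra).
  assert (ex' : ex_RInt rar a b) by (apply (ex_RInt_ext g); auto).
  unfold Rint. destruct (excluded_middle_informative _) as [H|H].
  - destruct (constructive_indefinite_description _ H) as [pr Hpr]. simpl.
    rewrite <- RInt_Reals. symmetry. apply RInt_ext. auto.
  - exfalso. apply H. exists (ex_RInt_Reals_0 _ _ _ ex'). auto.
Qed.

Lemma Rint_eq_F p : 0 < p <= p0 -> Rint rar p0 p = FF p.
Proof.
  intro Hp. assert (H0 := p0_pos E rho0 p0 rmax rhoH rhat HS).
  rewrite Rint_eq; auto. lra.
Qed.

Lemma Rint_eq_F' a : 0 < a <= p0 -> Rint rar a p0 = - FF a.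
Proof.
  intro Hp. assert (H0 := p0_pos E rho0 p0 rmax rhoH rhat HS).
  rewrite Rint_eq; auto; [|lra]. unfold FF.
  rewrite <- (opp_RInt_swap g p0 a). reflexivity. apply g_ex; lra.
Qed.

Definition SS p := sqrt ((p - p0) * (/ rho0 - / rhoH p)).

Let fkk := fk E rho0 p0 rhoH rhat.

Lemma fk_le p : 0 < p <= p0 -> fkk p = FF p.
Proof. intro Hp. unfold fkk, fk. destruct (Rle_dec p p0); [|lra]. apply Rint_eq_F; auto. Qed.

Lemma fk_gt p : p0 < p -> fkk p = SS p.
Proof. intro Hp. unfold fkk, fk. destruct (Rle_dec p p0); [lra|]. reflexivity. Qed.

Lemma rhoH_gt p : p0 < p -> rho0 < rhoH p.
Proof. intro Hp. destruct (Pf_HH E HE rho0 p0 rmax rhoH rhat HS p Hp) as [H _]. lra. Qed.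

Lemma inv_diff_pos p : p0 < p -> 0 < / rho0 - / rhoH p.
Proof.
  intro Hp. assert (H0 := rho0_pos E rho0 p0 rmax rhoH rhat HS). assert (H1 := rhoH_gt p Hp).
  assert (/ rhoH p < / rho0) by (apply Rinv_lt_contravar; nra). lra.
Qed.

Lemma SS_pos p : p0 < p -> 0 < SS p.
Proof.
  intro Hp. unfold SS. apply sqrt_lt_R0. apply Rmult_lt_0_compat; [lra|]. apply inv_diff_pos; auto.
Qed.

Lemma SS_incr x y : p0 < x -> x < y -> SS x < SS y.
Proof.
  intros Hx Hy. unfold SS.
  assert (H0 := rho0_pos E rho0 p0 rmax rhoH rhat HS).
  assert (h1 := inv_diff_pos x Hx). assert (h2 := rhoH_gt x Hx).
  assert (h3 := rhoH_incr E HE rho0 p0 rmax rhoH rhat HS x y Hx Hy).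
  assert (/ rhoH y < / rhoH x) by (apply Rinv_lt_contravar; nra).
  apply sqrt_lt_1; nra.
Qed.

Lemma SS_cont x : p0 < x -> continuity_pt SS x.
Proof.
  intro Hx. unfold SS. assert (H0 := rho0_pos E rho0 p0 rmax rhoH rhat HS).
  assert (h1 := inv_diff_pos x Hx). assert (h2 := rhoH_gt x Hx).
  assert (Hc := rhoH_cont E HE rho0 p0 rmax rhoH rhat HS x Hx).
  cont.
  - lra.
  - apply continuity_pt_sqrt. nra.
Qed.


Lemma fk_incr x y : 0 < x -> x < y -> fkk x < fkk y.
Proof.
  intros Hx Hy.
  destruct (Rle_or_lt y p0) as [h|h].
  - rewrite !fk_le; try lra. apply FF_incr; lra.
  - rewrite (fk_gt y h). destruct (Rle_or_lt x p0) as [h'|h'].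
    + rewrite fk_le; [|lra]. assert (FF x <= FF p0).
      { destruct (Rle_lt_or_eq_dec _ _ h') as [e|e]; [left; apply FF_incr; lra| subst; lra]. }
      rewrite FF_p0 in H. generalize (SS_pos y h). lra.
    + rewrite fk_gt; auto. apply SS_incr; auto.
Qed.

Lemma fk_cont x : 0 < x -> continuity_pt fkk x.
Proof.
  intro Hx. destruct (Rtotal_order x p0) as [h|[h|h]].
  - apply (cont_local _ FF x (Rmin x (p0 - x))).
    + apply Rmin_pos; lra.
    + intros y Hy. assert (Hm1 := Rmin_l x (p0 - x)). assert (Hm2 := Rmin_r x (p0 - x)).
      apply Rabs_def2 in Hy. apply fk_le. lra.
    + apply FF_cont; auto.
  - subst x. apply cont_ed. intros eps Heps.
    destruct (cont_ed' FF p0 (FF_cont p0 Hx) eps Heps) as [d1 [Hd1 Hdd1]].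
    assert (H0 := rho0_pos E rho0 p0 rmax rhoH rhat HS).
    assert (Hm1 := Rmin_l d1 (Rmin p0 (eps * eps * rho0))).
    assert (Hm2 := Rmin_r d1 (Rmin p0 (eps * eps * rho0))).
    assert (Hm3 := Rmin_l p0 (eps * eps * rho0)). assert (Hm4 := Rmin_r p0 (eps * eps * rho0)).
    assert (Hmp : 0 < Rmin d1 (Rmin p0 (eps * eps * rho0))).
    { repeat apply Rmin_pos; try lra. apply Rmult_lt_0_compat; nra. }
    set (d := Rmin d1 (Rmin p0 (eps * eps * rho0))) in *.
    exists d. split; [lra|].
    intros y Hy. rewrite (fk_le p0); [|lra]. rewrite FF_p0.
    destruct (Rle_or_lt y p0) as [h|h].
    + rewrite fk_le. rewrite <- FF_p0. apply Hdd1. apply Rabs_def2 in Hy. apply Rabs_def1; lra.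
      apply Rabs_def2 in Hy. lra.
    + rewrite fk_gt; auto. assert (Hs := SS_pos y h). rewrite Rminus_0_r, Rabs_right; [|lra].
      unfold SS. rewrite <- (sqrt_square eps); [|lra]. apply sqrt_lt_1.
      * generalize (inv_diff_pos y h); nra.
      * nra.
      * apply Rabs_def2 in Hy. assert (h1 := rhoH_gt y h).
        assert (0 < / rhoH y) by (apply Rinv_0_lt_compat; lra).
        assert (y - p0 < eps * eps * rho0) by lra.
        assert ((y - p0) * / rho0 < eps * eps).
        { apply (Rmult_lt_reg_r rho0); auto. rewrite Rmult_assoc, Rinv_l; lra. }
        nra.
  - apply (cont_local _ SS x (x - p0)); [lra| |].
    + intros y Hy. apply Rabs_def2 in Hy. apply fk_gt. lra.
    + apply SS_cont; auto.
Qed.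

Lemma fk_large M : exists p, 0 < p /\ M < fkk p.
Proof.
  assert (H0 := p0_pos E rho0 p0 rmax rhoH rhat HS).
  assert (Hr0 := rho0_pos E rho0 p0 rmax rhoH rhat HS).
  set (p1 := p0 + 1). assert (Hp1 : p0 < p1) by (unfold p1; lra).
  set (c1 := / rho0 - / rhoH p1). assert (Hc1 : 0 < c1) by (apply inv_diff_pos; auto).
  set (p := p1 + (M * M + 1) / c1).
  assert (Hq : 0 < (M * M + 1) / c1) by (apply Rdiv_lt_0_compat; nra).
  assert (Hpp : p1 < p) by (unfold p; lra).
  exists p. split; [lra|]. rewrite fk_gt; [|lra]. unfold SS.
  assert (Hd : c1 <= / rho0 - / rhoH p).
  { unfold c1. assert (h1 := rhoH_incr E HE rho0 p0 rmax rhoH rhat HS p1 p Hp1 Hpp).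
    assert (h2 := rhoH_gt p1 Hp1).
    assert (/ rhoH p < / rhoH p1) by (apply Rinv_lt_contravar; nra). lra. }
  assert (Hk : (M * M + 1) / c1 * c1 = M * M + 1) by (field; lra).
  assert (M * M < (p - p0) * (/ rho0 - / rhoH p)).
  { assert ((p - p0) * c1 <= (p - p0) * (/ rho0 - / rhoH p)) by (apply Rmult_le_compat_l; lra).
    unfold p, p1 in *. nra. }
  apply Rle_lt_trans with (Rabs M); [apply Rle_abs|].
  rewrite <- sqrt_Rsqr_abs. apply sqrt_lt_1; [apply Rle_0_sqr| nra | exact H].
Qed.

Lemma fk_bot : Bot fkk (improper0 rar p0).
Proof.
  assert (H0 := p0_pos E rho0 p0 rmax rhoH rhat HS).
  unfold improper0. destruct (excluded_middle_informative _) as [H|H].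
  - destruct (constructive_indefinite_description _ H) as [L HL]. simpl.
    assert (Hpart : forall p, 0 < p <= p0 -> - L < FF p).
    { intros p Hp. destruct (Rle_or_lt (FF p) (- L)) as [h|h]; auto. exfalso.
      assert (Hlt := FF_incr (p / 2) p ltac:(lra) ltac:(lra)).
      destruct (HL (FF p - FF (p / 2))) as [d [Hd Hdd]]; [lra|].
      set (a := Rmin (p / 2) d / 2).
      assert (Hm1 := Rmin_l (p / 2) d). assert (Hm2 := Rmin_r (p / 2) d).
      assert (Hm0 : 0 < Rmin (p / 2) d) by (apply Rmin_pos; lra).
      specialize (Hdd a ltac:(unfold a; lra)).
      rewrite Rint_eq_F' in Hdd; [|unfold a; lra].
      assert (FF a < FF (p / 2)) by (apply FF_incr; unfold a; lra).
      apply Rabs_def2 in Hdd. lra. }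
    split.
    + intros p Hp. destruct (Rle_or_lt p p0) as [h|h].
      * rewrite fk_le; [|lra]. apply Hpart; lra.
      * rewrite fk_gt; auto. generalize (SS_pos p h) (Hpart p0 ltac:(lra)). rewrite FF_p0. lra.
    + intros eps Heps. destruct (HL eps Heps) as [d [Hd Hdd]].
      set (a := Rmin d p0 / 2).
      assert (Hm1 := Rmin_l d p0). assert (Hm2 := Rmin_r d p0).
      assert (Hm0 : 0 < Rmin d p0) by (apply Rmin_pos; lra).
      exists a. split; [unfold a; lra|].
      specialize (Hdd a ltac:(unfold a; lra)). rewrite Rint_eq_F' in Hdd; [|unfold a; lra].
      rewrite fk_le; [|unfold a; lra]. apply Rabs_def2 in Hdd. lra.
  - intro M. apply NNPP. intro Hn. apply H.
    assert (Hge : forall a, 0 < a -> M <= fkk a).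
    { intros a Ha. destruct (Rle_or_lt M (fkk a)); auto. exfalso. apply Hn. exists a; auto. }
    set (Es := fun x => exists a, 0 < a <= p0 /\ x = - FF a).
    destruct (completeness Es) as [L [HLu HLl]].
    + exists (- M). intros x [a [Ha ->]]. generalize (Hge a ltac:(lra)). rewrite fk_le; auto. lra.
    + exists (- FF p0). exists p0. split; auto; lra.
    + exists L. intros eps Heps.
      destruct (classic (exists x, Es x /\ L - eps < x)) as [[x [[a1 [Ha1 ->]] Hx]]|Hno].
      * exists a1. split; [lra|]. intros a Ha.
        rewrite Rint_eq_F'; [|lra].
        assert (FF a < FF a1) by (apply FF_incr; lra).
        assert (- FF a <= L) by (apply HLu; exists a; split; auto; lra).
        apply Rabs_def1; lra.
      * exfalso. assert (L <= L - eps); [|lra]. apply HLl. intros x Hx.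
        destruct (Rle_or_lt x (L - eps)) as [h|h]; auto. exfalso. apply Hno. exists x; auto.
Qed.

End Rar2.


Lemma wmono (h : R -> R) : (forall x y, 0 < x -> x < y -> h x < h y) ->
  forall x y, 0 < x -> x <= y -> h x <= h y.
Proof. intros Hh x y Hx Hxy. destruct (Rle_lt_or_eq_dec _ _ Hxy) as [e|e]; [left; auto| subst; lra]. Qed.

Lemma main_abs (fl fr : R -> R) (ul ur : R) (Il Ir : ERbar) :
  (forall x y, 0 < x -> x < y -> fl x < fl y) -> (forall x, 0 < x -> continuity_pt fl x) ->
  (forall M, exists p, 0 < p /\ M < fl p) -> Bot fl Il ->
  (forall x y, 0 < x -> x < y -> fr x < fr y) -> (forall x, 0 < x -> continuity_pt fr x) ->
  (forall M, exists p, 0 < p /\ M < fr p) -> Bot fr Ir ->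
  (exists! p, 0 < p /\ fl p + fr p + ur - ul = 0) <-> R_lt_ER (ur - ul) (ER_plus Il Ir).
Proof.
  intros Hil Hcl Hll Hbl Hir Hcr Hlr Hbr.
  assert (Wl := wmono fl Hil). assert (Wr := wmono fr Hir).
  split.
  - intros [p [[Hp Hf] _]]. destruct Il as [Ll|]; destruct Ir as [Lr|]; simpl; auto.
    destruct Hbl as [Hbl _]. destruct Hbr as [Hbr _].
    generalize (Hbl p Hp) (Hbr p Hp). lra.
  - intro H.
    assert (Ha : exists a, 0 < a /\ fl a + fr a + ur - ul < 0).
    { destruct Il as [Ll|]; destruct Ir as [Lr|]; simpl in H.
      - destruct Hbl as [_ Hbl]. destruct Hbr as [_ Hbr].
        destruct (Hbl ((Ll + Lr - (ur - ul)) / 2)) as [al [Hal Hal']]; [lra|].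
        destruct (Hbr ((Ll + Lr - (ur - ul)) / 2)) as [ar [Har Har']]; [lra|].
        exists (Rmin al ar). assert (0 < Rmin al ar) by (apply Rmin_pos; auto).
        split; auto.
        generalize (Wl _ _ H0 (Rmin_l al ar)) (Wr _ _ H0 (Rmin_r al ar)). lra.
      - destruct (Hbr (ul - ur - fl 1)) as [ar [Har Har']].
        exists (Rmin ar 1). assert (0 < Rmin ar 1) by (apply Rmin_pos; lra).
        split; auto.
        generalize (Wl _ _ H0 (Rmin_r ar 1)) (Wr _ _ H0 (Rmin_l ar 1)). lra.
      - destruct (Hbl (ul - ur - fr 1)) as [al [Hal Hal']].
        exists (Rmin al 1). assert (0 < Rmin al 1) by (apply Rmin_pos; lra).
        split; auto.
        generalize (Wl _ _ H0 (Rmin_l al 1)) (Wr _ _ H0 (Rmin_r al 1)). lra.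
      - destruct (Hbr (ul - ur - fl 1)) as [ar [Har Har']].
        exists (Rmin ar 1). assert (0 < Rmin ar 1) by (apply Rmin_pos; lra).
        split; auto.
        generalize (Wl _ _ H0 (Rmin_r ar 1)) (Wr _ _ H0 (Rmin_l ar 1)). lra. }
    destruct Ha as [a [Ha Hfa]].
    destruct (Hll (ul - ur - fr 1)) as [pl [Hpl Hpl']].
    set (b := Rmax pl 1).
    assert (Hb1 := Rmax_l pl 1). assert (Hb2 := Rmax_r pl 1). fold b in Hb1, Hb2.
    assert (Hfb : 0 < fl b + fr b + ur - ul).
    { generalize (Wl pl b Hpl Hb1) (Wr 1 b ltac:(lra) Hb2). lra. }
    assert (Hab : a < b).
    { destruct (Rlt_or_le a b) as [h|h]; auto.
      generalize (Wl b a ltac:(lra) h) (Wr b a ltac:(lra) h). lra. }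
    destruct (my_IVT (fun p => fl p + fr p + ur - ul) a b 0 Hab) as [z [Hz Hfz]].
    + intros x Hx. assert (0 < x) by lra.
      assert (h1 := Hcl x H0). assert (h2 := Hcr x H0). cont.
    + simpl. lra.
    + exists z. split; [split; [lra| exact Hfz]|].
      intros z' [Hz' Hfz']. simpl in Hfz.
      destruct (Rtotal_order z z') as [h|[h|h]]; auto; exfalso.
      * generalize (Hil z z' ltac:(lra) h) (Hir z z' ltac:(lra) h). lra.
      * generalize (Hil z' z ltac:(lra) h) (Hir z' z ltac:(lra) h). lra.
Qed.

Theorem theorem1
  (El Er : EOS)
  (rhol ul pl rhor ur pr : R)
  (rhomaxl rhomaxr : R)
  (rhoHl rhoHr rhatl rhatr : R -> R)
  (HEl : EOS_ok El) (HEr : EOS_ok Er)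
  (Hl : side_ok El rhol pl rhomaxl rhoHl rhatl)
  (Hr : side_ok Er rhor pr rhomaxr rhoHr rhatr) :
  let f := fun p => fk El rhol pl rhoHl rhatl p + fk Er rhor pr rhoHr rhatr p
                    + ur - ul in
  let Il := improper0 (rar_integrand El rhatl) pl in
  let Ir := improper0 (rar_integrand Er rhatr) pr in
  (exists! pstar, 0 < pstar /\ f pstar = 0) <-> R_lt_ER (ur - ul) (ER_plus Il Ir).
Proof.
  intros f Il Ir. unfold f, Il, Ir.
  apply main_abs.
  - apply (fk_incr El HEl rhol pl rhomaxl rhoHl rhatl Hl).
  - apply (fk_cont El HEl rhol pl rhomaxl rhoHl rhatl Hl).
  - apply (fk_large El HEl rhol pl rhomaxl rhoHl rhatl Hl).
  - apply (fk_bot El HEl rhol pl rhomaxl rhoHl rhatl Hl).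
  - apply (fk_incr Er HEr rhor pr rhomaxr rhoHr rhatr Hr).
  - apply (fk_cont Er HEr rhor pr rhomaxr rhoHr rhatr Hr).
  - apply (fk_large Er HEr rhor pr rhomaxr rhoHr rhatr Hr).
  - apply (fk_bot Er HEr rhor pr rhomaxr rhoHr rhatr Hr).
Qed.
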